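(* Let $G$ be the three-player game with $A_i=\{a_{i1},a_{i2}\}$ for $i=1,2,3$ and fitness vectors $\pi(a_{11},a_{21},a_{31})=(7,7,7)$, $\pi(a_{11},a_{22},a_{31})=(9,6,0)$, $\pi(a_{12},a_{21},a_{31})=(6,0,9)$, $\pi(a_{12},a_{22},a_{31})=(6,0,9)$, $\pi(a_{11},a_{21},a_{32})=(0,9,6)$, $\pi(a_{11},a_{22},a_{32})=(9,6,0)$, $\pi(a_{12},a_{21},a_{32})=(0,9,6)$, $\pi(a_{12},a_{22},a_{32})=(1,1,1)$. Then the profile $(a_{11},a_{21},a_{31})$, which is a Pareto-efficient strict Nash equilibrium of $G$, is not stable under perfect observability.
   Context: Preference types: $\Theta=\mathbb{R}^A$, $A=A_1\times A_2\times A_3$ (utility functions on $A$, extended multilinearly to mixed profiles); $\pi_i$ likewise extended. $\mathcal{M}(\Theta^3)$ is the set of product distributions $\mu=\mu_1\times\mu_2\times\mu_3$ with finitely supported marginals; $\operatorname{supp}\mu=\prod_i\operatorname{supp}\mu_i$, $\mu(\theta)=\prod_i\mu_i(\theta_i)$, $\mu_{-i}(\theta_{-i})=\prod_{j\ne i}\mu_j(\theta_j)$. Mutants: for nonempty $J\subseteq N=\{1,2,3\}$, a mutant sub-profile is $\tilde\theta_J\in\prod_{j\in J}(\Theta\setminus\operatorname{supp}\mu_j)$ with shares $\varepsilon\in(0,1)^{|J|}$, $\|\varepsilon\|=\max_j\varepsilon_j$; post-entry $\tilde\mu^\varepsilon_i=(1-\varepsilon_i)\mu_i+\varepsilon_i\delta_{\tilde\theta_i}$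 for $i\in J$, $\tilde\mu^\varepsilon_i=\mu_i$ otherwise. Perfect observability: an equilibrium is a map $b:\operatorname{supp}\mu\to\prod_i\Delta(A_i)$ such that each $b(\theta)$ is a Nash equilibrium of the game with payoffs $\theta_1,\theta_2,\theta_3$; $B_1(\mu)$ is the set of these; $(\mu,b)$ is a configuration, with aggregate outcome $\varphi_{\mu,b}(a)=\sum_{\theta}\mu(\theta)\prod_i b_i(\theta)(a_i)$. Average fitness $\Pi_{\theta_i}(\mu;b)=\sum_{\theta'_{-i}}\mu_{-i}(\theta'_{-i})\pi_i(b(\theta_i,\theta'_{-i}))$. Balanced: equal average fitness of all types within each population. Focal set $B_1(\tilde\mu^\varepsilon;b)=\{\tilde b\in B_1(\tilde\mu^\varepsilon):\tilde b=b\text{ on }\operatorname{supp}\mu\}$. $(\mu,b)$ is stable if balanced and for every nonempty $J$ and every $\tilde\theta_J$ there is $\bar\epsilon\in(0,1)$ such that for all $\varepsilon$ with $\|\varepsilon\|<\bar\epsilon$ and all $\tilde b$ in the focal set, either (i) some $j\in J$ has $\Pi_{\theta_j}(\tilde\mu^\varepsilon;\tilde b)>\Pi_{\tilde\theta_j}(\tilde\mu^\varepsilon;\tilde b)$ for all $\theta_j\in\operatorname{supp}\mu_j$, or (ii) for every $i$ all types in $\operatorname{supp}\tilde\mu^\varepsilon_i$ have equal average fitness. A pure profile $a$ is stable if the point mass at $a$ is the aggregate outcome of a stable configuration. *)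

(* Defs.v *)
(* The real numbers are taken to be an arbitrary real closed
   field R (rcfType); the reals are an instance, so this is a generalization. *)
From HB Require Import structures.
From mathcomp Require Import all_boot all_order all_algebra.
Set Implicit Arguments. Unset Strict Implicit. Unset Printing Implicit Defensive.
Import Order.TTheory GRing.Theory Num.Theory.

(* Players 0,1,2 (= players 1,2,3 of the paper); actions 0,1 (= a_{i1}, a_{i2}). *)
Definition prof := {ffun 'I_3 -> 'I_2}.
Definition p0 : 'I_3 := @Ordinal 3 0 isT.
Definition p1 : 'I_3 := @Ordinal 3 1 isT.
Definition p2 : 'I_3 := @Ordinal 3 2 isT.

Definition nxt (i : 'I_3) : 'I_3 := inord ((i + 1) %% 3).
Definition nxt2 (i : 'I_3) : 'I_3 := inord ((i + 2) %% 3).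

Definition payv (a : prof) : nat * nat * nat :=
  match nat_of_ord (a p0), nat_of_ord (a p1), nat_of_ord (a p2) with
  | 0, 0, 0 => (7, 7, 7)
  | 0, 1, 0 => (9, 6, 0)
  | 1, 0, 0 => (6, 0, 9)
  | 1, 1, 0 => (6, 0, 9)
  | 0, 0, 1 => (0, 9, 6)
  | 0, 1, 1 => (9, 6, 0)
  | 1, 0, 1 => (0, 9, 6)
  | _, _, _ => (1, 1, 1)
  end.

Definition pi_nat (i : 'I_3) (a : prof) : nat :=
  let '(x, y, z) := payv a in nth 0 [:: x; y; z] i.

Definition astar : prof := [ffun _ => ord0].

Definition upd (a : prof) (i : 'I_3) (c : 'I_2) : prof :=
  [ffun j => if j == i then c else a j].

Local Open Scope ring_scope.

Section Game.
Variable R : rcfType.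

(* preference types: utility functions on A *)
Definition Th := {ffun prof -> R}.
Definition mixed := {ffun 'I_3 -> {ffun 'I_2 -> R}}.
Definition is_dist2 (p : {ffun 'I_2 -> R}) :=
  (forall k, 0 <= p k) /\ \sum_k p k = 1.
Definition is_mixed (s : mixed) := forall i, is_dist2 (s i).
Definition EU (u : Th) (s : mixed) : R :=
  \sum_(a : prof) (\prod_(i < 3) s i (a i)) * u a.
Definition dev (s : mixed) (i : 'I_3) (t : {ffun 'I_2 -> R}) : mixed :=
  [ffun j => if j == i then t else s j].
Definition isNE (th : {ffun 'I_3 -> Th}) (s : mixed) :=
  is_mixed s /\ forall i t, is_dist2 t -> EU (th i) (dev s i t) <= EU (th i) s.

Definition fit (i : 'I_3) : Th := [ffun a => (pi_nat i a)%:R].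

(* A population state mu = mu_1 x mu_2 x mu_3 with finitely supported marginals:
   mu_i has support s i (duplicate-free list) and weights w i t > 0 on it. *)
Definition is_pop (s : 'I_3 -> seq Th) (w : 'I_3 -> Th -> R) :=
  forall i, [/\ uniq (s i), (forall t, t \in s i -> 0 < w i t)
             & \sum_(t <- s i) w i t = 1].

Definition tprof := {ffun 'I_3 -> Th}.
Definition in_supp (s : 'I_3 -> seq Th) (th : tprof) := forall i, th i \in s i.
Definition strat := tprof -> mixed.
(* b in B_1(mu) (values outside supp mu are irrelevant) *)
Definition is_eqm (s : 'I_3 -> seq Th) (b : strat) :=
  forall th, in_supp s th -> isNE th (b th).

Definition tp3 (i : 'I_3) (t x y : Th) : tprof :=
  [ffun j => if j == i then t else if j == nxt i then x else y].

Definition avgfit (s : 'I_3 -> seq Th) (w : 'I_3 -> Th -> R) (b : strat)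
    (i : 'I_3) (t : Th) : R :=
  \sum_(x <- s (nxt i)) \sum_(y <- s (nxt2 i))
     (w (nxt i) x * w (nxt2 i) y) * EU (fit i) (b (tp3 i t x y)).

Definition balanced s w b :=
  forall i t t', t \in s i -> t' \in s i -> avgfit s w b i t = avgfit s w b i t'.

Definition ent_s (s : 'I_3 -> seq Th) (J : {set 'I_3}) (mt : tprof) (i : 'I_3) :=
  if i \in J then rcons (s i) (mt i) else s i.
Definition ent_w (w : 'I_3 -> Th -> R) (J : {set 'I_3}) (mt : tprof)
    (e : 'I_3 -> R) (i : 'I_3) (t : Th) : R :=
  if i \in J then (if t == mt i then e i else (1 - e i) * w i t) else w i t.

Definition focal (s s' : 'I_3 -> seq Th) (b b' : strat) :=
  is_eqm s' b' /\ forall th, in_supp s th -> b' th = b th.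

Definition stable s w b :=
  balanced s w b /\
  forall (J : {set 'I_3}) (mt : tprof),
    J != set0 -> (forall j, j \in J -> mt j \notin s j) ->
    exists eb : R, 0 < eb < 1 /\
      forall e : 'I_3 -> R,
        (forall j, j \in J -> 0 < e j < 1) ->
        (forall j, j \in J -> e j < eb) ->
        forall b', focal s (ent_s s J mt) b b' ->
          (exists2 j, j \in J & forall t, t \in s j ->
              avgfit (ent_s s J mt) (ent_w w J mt e) b' j (mt j)
              < avgfit (ent_s s J mt) (ent_w w J mt e) b' j t)
          \/ balanced (ent_s s J mt) (ent_w w J mt e) b'.

Definition tpf (x0 x1 x2 : Th) : tprof :=
  [ffun j : 'I_3 => if j == p0 then x0 else if j == p1 then x1 else x2].

Definition agg s w (b : strat) (a : prof) : R :=
  \sum_(x0 <- s p0) \sum_(x1 <- s p1) \sum_(x2 <- s p2)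
    (w p0 x0 * w p1 x1 * w p2 x2) * \prod_(i < 3) b (tpf x0 x1 x2) i (a i).

Definition config s w b := is_pop s w /\ is_eqm s b.

Definition stable_profile (a : prof) :=
  exists (s : 'I_3 -> seq Th) (w : 'I_3 -> Th -> R) (b : strat),
    [/\ config s w b, stable s w b
      & forall a', agg s w b a' = (if a' == a then 1 else 0)].

Definition strict_NE (a : prof) :=
  forall i (c : 'I_2), c != a i -> fit i (upd a i c) < fit i a.

Definition pareto_eff (a : prof) :=
  ~ exists a' : prof, (forall j, fit j a <= fit j a') /\ exists j, fit j a < fit j a'.

End Game.

(* Main.v *)
Require Import Defs.
From mathcomp Require Import all_boot all_order all_algebra.
From mathcomp Require Import ring lra.
Set Implicit Arguments. Unset Strict Implicit. Unset Printing Implicit Defensive.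
Import Order.TTheory GRing.Theory Num.Theory.
Local Open Scope ring_scope.

Definition o0 : 'I_2 := ord0.
Definition o1 : 'I_2 := @Ordinal 2 1 isT.

Lemma I2_cases (k : 'I_2) : k = o0 \/ k = o1.
Proof. case: k => [[|[|n]] Hk]; [left|right|by []]; exact: val_inj. Qed.

Lemma upd_id (a : prof) i : upd a i (a i) = a.
Proof. apply/ffunP => j; rewrite ffunE; by case: eqP => [->|]. Qed.
Lemma upd_upd (a : prof) i c d : upd (upd a i c) i d = upd a i d.
Proof. apply/ffunP => j; rewrite !ffunE; by case: eqP. Qed.
Lemma upd_at (a : prof) i c : upd a i c i = c.
Proof. by rewrite ffunE eqxx. Qed.

Section S.
Variable R : rcfType.
Definition pureM (a : prof) : mixed R := [ffun i => [ffun k => if k == a i then 1 else 0]].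

Lemma prod_pure_dev (a a' : prof) i (t : {ffun 'I_2 -> R}) :
  \prod_(j < 3) (dev (pureM a) i t) j (a' j) = t (a' i) * (a' == upd a i (a' i))%:R.
Proof.
rewrite (bigD1 i) //= /dev ffunE eqxx; congr (_ * _).
case: eqP => [E|Hne].
  apply: big1 => j Hj; rewrite !ffunE (negbTE Hj) ffunE.
  have -> : a' j = a j by rewrite E ffunE (negbTE Hj).
  by rewrite eqxx.
case: (pickP (fun j => a' j != upd a i (a' i) j)) => [j Hj|H]; last first.
  by case: Hne; apply/ffunP => j; move: (H j) => /= /negbFE/eqP.
have Hji : j != i by apply: contra Hj => /eqP ->; rewrite upd_at.
rewrite (bigD1 j) //= !ffunE (negbTE Hji) ffunE.
move: Hj; rewrite ffunE (negbTE Hji) => /negbTE ->; by rewrite mul0r.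
Qed.

Lemma EU_dev_pure (u : Th R) (a : prof) i (t : {ffun 'I_2 -> R}) :
  EU u (dev (pureM a) i t) = t o0 * u (upd a i o0) + t o1 * u (upd a i o1).
Proof.
rewrite /EU; under eq_bigr do rewrite prod_pure_dev.
have Hne : upd a i o1 != upd a i o0.
  by apply/eqP => /ffunP /(_ i); rewrite !upd_at.
rewrite (bigD1 (upd a i o0)) //= (bigD1 (upd a i o1)) //=.
rewrite !upd_at !eqxx !mulr1 big1 ?addr0 // => a' /andP [H1 H0].
case: eqP => [E|_]; last by rewrite /= mulr0n mulr0 mul0r.
exfalso; case: (I2_cases (a' i)) => E2; [move: H1|move: H0]; by rewrite E E2 eqxx.
Qed.

Lemma EU_pure (u : Th R) (a : prof) : EU u (pureM a) = u a.
Proof.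
have -> : pureM a = dev (pureM a) p0 ((pureM a) p0).
  by apply/ffunP => j; rewrite [RHS]ffunE; case: ifP => [/eqP ->|].
rewrite EU_dev_pure !ffunE.
case: (I2_cases (a p0)) => E; rewrite E /=.
  by rewrite mul1r mul0r addr0 -E upd_id.
by rewrite mul1r mul0r add0r -E upd_id.
Qed.

Lemma EU_const (c : R) (s : mixed R) : is_mixed s -> EU [ffun _ => c] s = c.
Proof.
move=> Hs; rewrite /EU; under eq_bigr do rewrite ffunE.
rewrite -big_distrl /=.
rewrite -(bigA_distr_bigA (fun i k => s i k)) /=.
rewrite big1 ?mul1r // => i _; by case: (Hs i).
Qed.

Lemma dev_mixed (s : mixed R) i t : is_mixed s -> is_dist2 t -> is_mixed (dev s i t).
Proof. by move=> Hs Ht j; rewrite ffunE; case: eqP. Qed.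

Lemma pure_mixed a : is_mixed (pureM a).
Proof.
move=> i; split=> [k|]; rewrite ffunE; first by (rewrite ffunE; case: eqP).
rewrite (bigD1 (a i)) //= ffunE eqxx big1 ?addr0 // => k Hk.
by rewrite ffunE (negbTE Hk).
Qed.
Lemma I3_cases (j : 'I_3) : [\/ j = p0, j = p1 | j = p2].
Proof. case: j => [[|[|[|n]]] Hj]; [constructor 1|constructor 2|constructor 3|by []]; exact: val_inj. Qed.

Lemma prod3 (F : 'I_3 -> R) : \prod_(i < 3) F i = F p0 * F p1 * F p2.
Proof.
rewrite !big_ord_recr big_ord0 /= (mul1r (F _)) .
by congr (F _ * F _ * F _); apply: val_inj.
Qed.

Lemma sum2 (F : 'I_2 -> R) : \sum_(k < 2) F k = F o0 + F o1.
Proof.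
rewrite !big_ord_recr big_ord0 /= (add0r (F _)).
by congr (F _ + F _); apply: val_inj.
Qed.

Lemma dist01 (p : {ffun 'I_2 -> R}) : is_dist2 p -> [/\ 0 <= p o0, 0 <= p o1 & p o0 + p o1 = 1].
Proof. by case=> H0 H1; rewrite -sum2. Qed.

Lemma dist_le1 (p : {ffun 'I_2 -> R}) k : is_dist2 p -> p k <= 1.
Proof.
move=> /dist01 [H0 H1 H2]; case: (I2_cases k) => ->; rewrite -H2.
  by rewrite lerDl. by rewrite lerDr.
Qed.

Lemma seq_ge0 (I : eqType) (r : seq I) (F : I -> R) :
  (forall i, i \in r -> 0 <= F i) -> 0 <= \sum_(i <- r) F i.
Proof. by move=> H; rewrite big_seq; apply: sumr_ge0. Qed.

Lemma seq_eq0 (I : eqType) (r : seq I) (F : I -> R) :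
  (forall i, i \in r -> 0 <= F i) -> \sum_(i <- r) F i = 0 -> forall i, i \in r -> F i = 0.
Proof.
move=> H0 H i Hi; elim: r H0 H i Hi => [//|x r IH] H0 H i; rewrite big_cons in H.
have Fx : 0 <= F x by apply: H0; rewrite mem_head.
have Sr : 0 <= \sum_(j <- r) F j.
  by apply: seq_ge0 => j Hj; apply: H0; rewrite in_cons Hj orbT.
move/eqP: H; rewrite paddr_eq0 // => /andP [/eqP Hx /eqP Hr].
rewrite in_cons => /orP [/eqP -> //|Hi]; apply: IH Hr i Hi => j Hj.
by apply: H0; rewrite in_cons Hj orbT.
Qed.

Lemma tpf_eta (th : tprof R) : th = tpf (th p0) (th p1) (th p2).
Proof. apply/ffunP => j; rewrite ffunE; by case: (I3_cases j) => ->. Qed.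

Lemma astarE i : astar i = o0. Proof. by rewrite ffunE. Qed.

Lemma prod3_1 (a b c : R) : 0 <= a -> a <= 1 -> 0 <= b -> b <= 1 -> 0 <= c -> c <= 1 ->
  a * b * c = 1 -> [/\ a = 1, b = 1 & c = 1].
Proof.
move=> a0 a1 b0 b1 c0 c1 E.
have bc : b * c <= 1 by rewrite -[X in _ <= X](mulr1 1) ler_pM.
have ac : a * c <= 1 by rewrite -[X in _ <= X](mulr1 1) ler_pM.
have ab : a * b <= 1 by rewrite -[X in _ <= X](mulr1 1) ler_pM.
have h1 : 0 <= a * (1 - b * c) by rewrite mulr_ge0 // subr_ge0.
have h2 : 0 <= b * (1 - a * c) by rewrite mulr_ge0 // subr_ge0.
have h3 : 0 <= c * (1 - a * b) by rewrite mulr_ge0 // subr_ge0.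
have e1 : a * (1 - b * c) = a - 1 by rewrite mulrBr mulr1 mulrA E.
have e2 : b * (1 - a * c) = b - 1 by rewrite mulrBr mulr1 mulrA (mulrC b) E.
have e3 : c * (1 - a * b) = c - 1 by rewrite mulrBr mulr1 mulrC E.
split; lra.
Qed.

Lemma b_astar s w (b : strat R) : config s w b -> agg s w b astar = 1 ->
  forall th, in_supp s th -> b th = pureM astar.
Proof.
move=> [Hp Hb] Hagg.
pose W x0 x1 x2 := w p0 x0 * w p1 x1 * w p2 x2.
pose P th := \prod_(i < 3) b th i (astar i).
have Hw : forall i, \sum_(t <- s i) w i t = 1 by move=> i; case: (Hp i).
have Wpos : forall x0 x1 x2, x0 \in s p0 -> x1 \in s p1 -> x2 \in s p2 -> 0 < W x0 x1 x2.
  move=> x0 x1 x2 H0 H1 H2; rewrite /W; case: (Hp p0) => _ P0 _; case: (Hp p1) => _ P1 _;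
  case: (Hp p2) => _ P2 _; by rewrite !mulr_gt0 ?P0 ?P1 ?P2.
have Pb : forall th, in_supp s th -> 0 <= P th <= 1.
  move=> th Hth; have [Hm _] := Hb th Hth; rewrite /P prod3.
  have := dist_le1 (astar p0) (Hm p0); have := dist_le1 (astar p1) (Hm p1);
  have := dist_le1 (astar p2) (Hm p2).
  case: (Hm p0) => /(_ (astar p0)) g0 _; case: (Hm p1) => /(_ (astar p1)) g1 _;
  case: (Hm p2) => /(_ (astar p2)) g2 _ => l2 l1 l0.
  apply/andP; split; first by rewrite !mulr_ge0.
  have ab : b th p0 (astar p0) * b th p1 (astar p1) <= 1.
    by rewrite -[X in _ <= X](mulr1 1) ler_pM.
  by rewrite -[X in _ <= X](mulr1 1) ler_pM ?mulr_ge0.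
have HW : \sum_(x0 <- s p0) \sum_(x1 <- s p1) \sum_(x2 <- s p2) W x0 x1 x2 = 1.
  rewrite /W.
  under eq_bigr => x0 _ do under eq_bigr => x1 _ do rewrite -big_distrr /= Hw mulr1.
  under eq_bigr => x0 _ do rewrite -big_distrr /= Hw mulr1.
  by rewrite Hw.
have HG : \sum_(x0 <- s p0) \sum_(x1 <- s p1) \sum_(x2 <- s p2)
          W x0 x1 x2 * (1 - P (tpf x0 x1 x2)) = 0.
  under eq_bigr => x0 _ do under eq_bigr => x1 _ do under eq_bigr => x2 _ do
    rewrite mulrBr mulr1.
  under eq_bigr => x0 _ do under eq_bigr => x1 _ do rewrite sumrB.
  under eq_bigr => x0 _ do rewrite sumrB.
  rewrite sumrB HW; move: Hagg; rewrite /agg => ->; by rewrite subrr.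
have Hin : forall x0 x1 x2, x0 \in s p0 -> x1 \in s p1 -> x2 \in s p2 ->
    in_supp s (tpf x0 x1 x2).
  by move=> x0 x1 x2 H0 H1 H2 j; rewrite ffunE; case: (I3_cases j) => ->.
have Tge0 : forall x0 x1 x2, x0 \in s p0 -> x1 \in s p1 -> x2 \in s p2 ->
    0 <= W x0 x1 x2 * (1 - P (tpf x0 x1 x2)).
  move=> x0 x1 x2 H0 H1 H2; apply: mulr_ge0; first exact/ltW/Wpos.
  rewrite subr_ge0.
  by case/andP: (Pb _ (Hin _ _ _ H0 H1 H2)).
move=> th Hth.
have HP : P th = 1.
  rewrite (tpf_eta th).
  have H0 := Hth p0; have H1 := Hth p1; have H2 := Hth p2.
  have := seq_eq0 _ HG H0; move/(_ _) => L.
  have {L} := L (fun x0 Hx0 => seq_ge0 (fun x1 Hx1 => seq_ge0 (fun x2 Hx2 => Tge0 _ _ _ Hx0 Hx1 Hx2))).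
  move/seq_eq0 => /(_ (fun x1 Hx1 => seq_ge0 (fun x2 Hx2 => Tge0 _ _ _ H0 Hx1 Hx2)) _ H1).
  move/seq_eq0 => /(_ (fun x2 Hx2 => Tge0 _ _ _ H0 H1 Hx2) _ H2).
  move/eqP; rewrite mulf_eq0 gt_eqF ?Wpos //= subr_eq0 => /eqP <-. by [].
have [Hm _] := Hb th Hth.
move: HP; rewrite /P prod3 !astarE.
have g : forall i, 0 <= b th i o0 by move=> i; case: (Hm i).
move/(prod3_1 (g p0) (dist_le1 o0 (Hm p0)) (g p1) (dist_le1 o0 (Hm p1))
        (g p2) (dist_le1 o0 (Hm p2))) => [E0 E1 E2].
have E : forall i, b th i o0 = 1 by move=> i; case: (I3_cases i) => ->.
apply/ffunP => i; apply/ffunP => k; rewrite !ffunE.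
have [_ _ hs] := dist01 (Hm i); rewrite E in hs.
case: (I2_cases k) => -> /=; first by rewrite E.
lra.
Qed.

Definition mk (k0 k1 k2 : 'I_2) : prof :=
  [ffun j : 'I_3 => if j == p0 then k0 else if j == p1 then k1 else k2].
Lemma mk0 k0 k1 k2 : mk k0 k1 k2 p0 = k0. Proof. by rewrite ffunE. Qed.
Lemma mk1 k0 k1 k2 : mk k0 k1 k2 p1 = k1. Proof. by rewrite ffunE. Qed.
Lemma mk2 k0 k1 k2 : mk k0 k1 k2 p2 = k2. Proof. by rewrite ffunE. Qed.
Lemma upd_mk0 k0 k1 k2 r : upd (mk k0 k1 k2) p0 r = mk r k1 k2.
Proof. apply/ffunP => j; rewrite !ffunE; by case: (I3_cases j) => ->. Qed.
Lemma upd_mk1 k0 k1 k2 r : upd (mk k0 k1 k2) p1 r = mk k0 r k2.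
Proof. apply/ffunP => j; rewrite !ffunE; by case: (I3_cases j) => ->. Qed.
Lemma upd_mk2 k0 k1 k2 r : upd (mk k0 k1 k2) p2 r = mk k0 k1 r.
Proof. apply/ffunP => j; rewrite !ffunE; by case: (I3_cases j) => ->. Qed.
Lemma astar_mk : astar = mk o0 o0 o0.
Proof. apply/ffunP => j; rewrite !ffunE; by case: (I3_cases j) => ->. Qed.

Lemma nxt0 : nxt p0 = p1. Proof. by apply: val_inj; rewrite /= inordK. Qed.
Lemma nxt1 : nxt p1 = p2. Proof. by apply: val_inj; rewrite /= inordK. Qed.
Lemma nxt2_ : nxt p2 = p0. Proof. by apply: val_inj; rewrite /= inordK. Qed.
Lemma nxt20 : nxt2 p0 = p2. Proof. by apply: val_inj; rewrite /= inordK. Qed.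
Lemma nxt21 : nxt2 p1 = p0. Proof. by apply: val_inj; rewrite /= inordK. Qed.
Lemma nxt22 : nxt2 p2 = p1. Proof. by apply: val_inj; rewrite /= inordK. Qed.

Lemma tp3_0 (t x y : Th R) : tp3 p0 t x y = tpf t x y.
Proof. apply/ffunP => j; rewrite !ffunE nxt0; by case: (I3_cases j) => ->. Qed.
Lemma tp3_1 (t x y : Th R) : tp3 p1 t x y = tpf y t x.
Proof. apply/ffunP => j; rewrite !ffunE nxt1; by case: (I3_cases j) => ->. Qed.
Lemma tp3_2 (t x y : Th R) : tp3 p2 t x y = tpf x y t.
Proof. apply/ffunP => j; rewrite !ffunE nxt2_; by case: (I3_cases j) => ->. Qed.
Lemma tpf0 (a b c : Th R) : tpf a b c p0 = a. Proof. by rewrite ffunE. Qed.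
Lemma tpf1 (a b c : Th R) : tpf a b c p1 = b. Proof. by rewrite ffunE. Qed.
Lemma tpf2 (a b c : Th R) : tpf a b c p2 = c. Proof. by rewrite ffunE. Qed.

Definition br (u : Th R) (i : 'I_3) (a : prof) : 'I_2 :=
  if u (upd a i o1) <= u (upd a i o0) then o0 else o1.

Lemma br_ok u i a t : is_dist2 t ->
  EU u (dev (pureM (upd a i (br u i a))) i t) <= EU u (pureM (upd a i (br u i a))).
Proof.
move=> /dist01 [g0 g1 hs]; rewrite EU_dev_pure EU_pure !upd_upd /br.
case: ifP => H.
  have h : 0 <= t o1 * (u (upd a i o0) - u (upd a i o1)) by rewrite mulr_ge0 // subr_ge0.
  nra.
have h : 0 <= t o0 * (u (upd a i o1) - u (upd a i o0)).
  by rewrite mulr_ge0 // subr_ge0 ltW // ltNge H.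
nra.
Qed.

Section Main.
Variables (s : 'I_3 -> seq (Th R)) (w : 'I_3 -> Th R -> R) (b : strat R).
Hypothesis Hp : is_pop s w.
Hypothesis Hb : is_eqm s b.
Hypothesis Hbs : forall th, in_supp s th -> b th = pureM astar.

Definition cst j : R := 1 + \sum_(t <- s j) `|t astar|.
Definition mt : tprof R := [ffun j => [ffun _ => cst j]].

Lemma Hw j : \sum_(t <- s j) w j t = 1. Proof. by case: (Hp j). Qed.

Lemma mt_notin j : mt j \notin s j.
Proof.
apply/negP => H.
have U : uniq (s j) by case: (Hp j).
have : `|mt j astar| <= \sum_(t <- s j) `|t astar|.
  rewrite (bigD1_seq _ H U) /= lerDl; apply: sumr_ge0 => *; exact: normr_ge0.
rewrite !ffunE /cst ger0_norm; last by apply: addr_ge0 => //; apply: sumr_ge0 => *.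
by rewrite gerDr ler10.
Qed.

Lemma inc_ne j t : t \in s j -> (t == mt j) = false.
Proof. by move=> H; apply/negP => /eqP E; move: H; rewrite E (negbTE (mt_notin j)). Qed.

Definition d j := head (mt j) (s j).
Lemma d_in j : d j \in s j.
Proof.
rewrite /d; have := Hw j; case: (s j) => [|x r]; last by rewrite mem_head.
by rewrite big_nil => /eqP; rewrite eq_sym oner_eq0.
Qed.

Lemma inc_astar i u t : u \in s i -> is_dist2 t ->
  EU u (dev (pureM astar) i t) <= EU u (pureM astar).
Proof.
move=> Hu Ht.
pose th : tprof R := [ffun j => if j == i then u else d j].
have Hth : in_supp s th.
  by move=> j; rewrite ffunE; case: eqP => [->|]; [exact Hu|move=> _; exact: d_in].
have [_ H] := Hb Hth.
by move: (H i t Ht); rewrite Hbs // ffunE eqxx.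
Qed.

Definition prof_of (th : tprof R) : prof :=
  let m0 := th p0 == mt p0 in let m1 := th p1 == mt p1 in let m2 := th p2 == mt p2 in
  if m0 && m1 && ~~ m2 then upd (mk o0 o1 o0) p2 (br (th p2) p2 (mk o0 o1 o0))
  else if ~~ m0 && m1 && m2 then upd (mk o0 o0 o1) p0 (br (th p0) p0 (mk o0 o0 o1))
  else if m0 && ~~ m1 && m2 then upd (mk o1 o0 o0) p1 (br (th p1) p1 (mk o1 o0 o0))
  else astar.
Definition b' : strat R := fun th => pureM (prof_of th).

Lemma const_ok i (th : tprof R) (sg : mixed R) t : th i = mt i -> is_mixed sg -> is_dist2 t ->
  EU (th i) (dev sg i t) <= EU (th i) sg.
Proof.
move=> -> Hs Ht; rewrite ffunE !EU_const //; exact: dev_mixed.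
Qed.

Lemma focal_b' : focal s (ent_s s setT mt) b b'.
Proof.
split; last first.
  move=> th Hth; rewrite Hbs // /b' /prof_of.
  by rewrite !inc_ne ?Hth.
move=> th Hth; split; first exact: pure_mixed.
have Hc : forall j, th j = mt j \/ ((th j == mt j) = false /\ th j \in s j).
  move=> j; move: (Hth j); rewrite /ent_s in_setT mem_rcons in_cons.
  case/orP => [/eqP ->|H]; [by left|right; split => //; exact: inc_ne].
move=> i t Ht.
case: (Hc i) => [E|[E Hi]]; first by apply: const_ok => //; exact: pure_mixed.
rewrite /b' /prof_of.
case: (I3_cases i) E Hi => -> E Hi; rewrite E /= ?andbF ?andbT.
- case: (th p1 == mt p1); case: (th p2 == mt p2) => /=; try exact: inc_astar.
  exact: br_ok.
- case: (th p0 == mt p0); case: (th p2 == mt p2) => /=; try exact: inc_astar.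
  exact: br_ok.
- case: (th p0 == mt p0); case: (th p1 == mt p1) => /=; try exact: inc_astar.
  exact: br_ok.
Qed.

Section Avg.
Variable e : R.
Hypothesis e0 : 0 < e.
Hypothesis e1 : e < 1.
Let s' := ent_s s setT mt.
Let w' := ent_w w setT mt (fun _ => e).

Lemma s'E j : s' j = rcons (s j) (mt j). Proof. by rewrite /s' /ent_s in_setT. Qed.
Lemma w'E j t : w' j t = if t == mt j then e else (1 - e) * w j t.
Proof. by rewrite /w' /ent_w in_setT. Qed.

Lemma sumw j (F : Th R -> R) c : (forall y, y \in s j -> F y = w j y * c) ->
  \sum_(y <- s j) F y = c.
Proof. by move=> H; rewrite (eq_big_seq _ H) -big_distrl /= Hw mul1r. Qed.

Lemma avg_form k l (F : Th R -> Th R -> R) A B C D :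
  (forall x y, x \in s k -> y \in s l -> F x y = A) ->
  (forall x, x \in s k -> F x (mt l) = B) ->
  (forall y, y \in s l -> F (mt k) y = C) -> F (mt k) (mt l) = D ->
  \sum_(x <- s' k) \sum_(y <- s' l) (w' k x * w' l y) * F x y =
  (1 - e) * (1 - e) * A + (1 - e) * e * B + e * (1 - e) * C + e * e * D.
Proof.
move=> HA HB HC HD.
have inner : forall x, \sum_(y <- s' l) (w' k x * w' l y) * F x y =
    w' k x * ((1 - e) * \sum_(y <- s l) w l y * F x y + e * F x (mt l)).
  move=> x; rewrite s'E big_rcons /= (w'E l (mt l)) eqxx.
  rewrite (eq_big_seq (fun y => w' k x * (1 - e) * (w l y * F x y))); last first.
    by move=> y Hy; rewrite /= (w'E l y) inc_ne //; ring.
  rewrite -big_distrr /=; ring.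
rewrite s'E big_rcons /= inner (w'E k (mt k)) eqxx.
rewrite (@sumw k _ ((1 - e) * ((1 - e) * A + e * B))); last first.
  move=> x Hx; rewrite inner (w'E k x) inc_ne // HB // (@sumw l _ A); first ring.
  by move=> y Hy; rewrite HA // mulr1.
rewrite HD (@sumw l _ C); first ring.
by move=> y Hy; rewrite HC // mulr1.
Qed.

Lemma Fval (i : 'I_3) (th : tprof R) : EU (@fit R i) (b' th) = (pi_nat i (prof_of th))%:R.
Proof. by rewrite /b' EU_pure ffunE. Qed.

Ltac solv := move=> *; rewrite ?tp3_0 ?tp3_1 ?tp3_2 Fval /prof_of !tpf0 !tpf1 !tpf2 ?eqxx ?inc_ne //=;
  rewrite ?astar_mk ?upd_mk0 ?upd_mk1 ?upd_mk2;
  try (match goal with |- context [br ?u ?i ?a] => case: (I2_cases (br u i a)) => -> end); rewrite /pi_nat /payv !mk0 !mk1 !mk2 //.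

Lemma fin_ineq : (1 - e) * (1 - e) * 7 + (1 - e) * e * 7 + e * (1 - e) * 7 + e * e * 0 <
  (1 - e) * (1 - e) * 7 + (1 - e) * e * 6 + e * (1 - e) * 9 + e * e * 7.
Proof.
rewrite -subr_gt0.
have -> : (1 - e) * (1 - e) * 7 + (1 - e) * e * 6 + e * (1 - e) * 9 + e * e * 7 -
  ((1 - e) * (1 - e) * 7 + (1 - e) * e * 7 + e * (1 - e) * 7 + e * e * 0) = e + 6 * (e * e).
  by ring.
by rewrite addr_gt0 // mulr_gt0 // mulr_gt0.
Qed.
Ltac fin := exact: fin_ineq.

Lemma avg_lt i t : t \in s i -> avgfit s' w' b' i t < avgfit s' w' b' i (mt i).
Proof.
move=> Ht.
case: (I3_cases i) Ht => -> Ht; rewrite /avgfit ?nxt0 ?nxt1 ?nxt2_ ?nxt20 ?nxt21 ?nxt22.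
- rewrite (@avg_form _ _ _ 7 7 7 0); try solv.
  rewrite (@avg_form _ _ _ 7 6 9 7); try solv.
  fin.
- rewrite (@avg_form _ _ _ 7 7 7 0); try solv.
  rewrite (@avg_form _ _ _ 7 6 9 7); try solv.
  fin.
- rewrite (@avg_form _ _ _ 7 7 7 0); try solv.
  rewrite (@avg_form _ _ _ 7 6 9 7); try solv.
  fin.
Qed.
End Avg.
End Main.
End S.

Lemma part1 (R : rcfType) : strict_NE R astar.
Proof.
move=> i c Hc; rewrite !ffunE ltr_nat.
move: Hc; rewrite astar_mk.
case: (I3_cases i) => ->; case: (I2_cases c) => ->;
  rewrite ?upd_mk0 ?upd_mk1 ?upd_mk2 /pi_nat /payv !mk0 !mk1 !mk2 //.
Qed.

Lemma prof_eta (a : prof) : a = mk (a p0) (a p1) (a p2).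
Proof. apply/ffunP => j; rewrite ffunE; by case: (I3_cases j) => ->. Qed.

Lemma part2 (R : rcfType) : pareto_eff R astar.
Proof.
case=> a [H [j Hj]]; move: Hj (H p0) (H p1) (H p2); rewrite !ffunE !ler_nat ltr_nat.
rewrite (prof_eta a) astar_mk.
case: (I2_cases (a p0)) => ->; case: (I2_cases (a p1)) => ->; case: (I2_cases (a p2)) => ->;
 case: (I3_cases j) => ->; rewrite /pi_nat /payv !mk0 !mk1 !mk2 //.
Qed.

Theorem mainTheorem8 (R : rcfType) :
  [/\ strict_NE R astar, pareto_eff R astar & ~ stable_profile R astar].
Proof.
split; [exact: part1 | exact: part2 |].
move=> [s [w [b [[Hp Hb] [_ Hst] Hagg]]]].
have HA : agg s w b astar = 1 by rewrite Hagg eqxx.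
have Hbs := b_astar (conj Hp Hb) HA.
have NE : [set: 'I_3] != set0 by apply/set0Pn; exists p0; rewrite in_setT.
have [eb [/andP [eb0 eb1] H]] := Hst setT (mt s) NE (fun j _ => mt_notin Hp j).
pose e := eb / 2.
have e0 : 0 < e by rewrite divr_gt0.
have elt : e < eb by rewrite /e ltr_pdivrMr // ltr_pMr // ltr1n.
have e1 : e < 1 by apply: lt_trans elt eb1.
have := H (fun _ => e) (fun j _ => introT andP (conj e0 e1)) (fun j _ => elt) (b' s)
  (focal_b' Hp Hb Hbs).
case => [[j _ Hj] | Hbal].
  have h1 := Hj (d s j) (d_in Hp j).
  have h2 := avg_lt Hp e0 (d_in Hp j).
  by have := lt_trans h1 h2; rewrite ltxx.
have := Hbal p0 (mt s p0) (d s p0).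
rewrite /ent_s in_setT !mem_rcons !in_cons eqxx (d_in Hp) ?orbT /=.
move=> /(_ isT isT) E.
have := avg_lt Hp e0 (d_in Hp p0).
by rewrite /ent_s E ltxx.
Qed.
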